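(* Let $R$ be a Hecke symmetry with parameter $q$ on a finite dimensional vector space $V$, let $\mathbb T=\mathbb T(V)$ be the tensor algebra and $I$ its ideal generated by $\operatorname{Ker}(R-q\,\mathrm{id})\subset V^{\otimes2}$ (so $\Lambda(V,R)=\mathbb T/I$). Fix $n>1$ and put $L_k=\{a\in\mathbb T_k: a\,\mathbb T_{n-k}\subset I_n\}$ for $0\le k<n$, and $$y_k=\sum_{j=0}^{k-1}(-1)^{j}q^{\,k-1-j}\,T_1T_2\cdots T_j\in\mathcal H_k\quad(k>0),$$ (the $j=0$ term being $q^{k-1}$), acting on $\mathbb T_k=V^{\otimes k}$ via $R$. Then for $0<k<n$ one has $y_kL_k\subset V\otimes L_{k-1}$.
   Context: A Hecke symmetry with parameter $0\neq q\in\Bbbk$ on $V$ is a linear operator $R$ on $V\otimes V$ with $(R+\mathrm{id})(R-q\,\mathrm{id})=0$ and $(R\otimes\mathrm{id})(\mathrm{id}\otimes R)(R\otimes\mathrm{id})=(\mathrm{id}\otimes R)(R\otimes\mathrm{id})(\mathrm{id}\otimes R)$. The Hecke algebra $\mathcal H_k(q)$ acts on $V^{\otimes k}$ with $T_i$ acting by $\mathrm{id}^{\otimes(i-1)}\otimes R\otimes\mathrm{id}^{\otimes(k-i-1)}$. Subscripts denote homogeneous components; $\mathbb T_0=\Bbbk$. *)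

(* Defs.v *)
(* V = K^d with its standard basis; V^{(x)k} = functions on
   k-tuples of basis indices. *)
From HB Require Import structures.
From mathcomp Require Import all_boot all_algebra.
Set Implicit Arguments. Unset Strict Implicit. Unset Printing Implicit Defensive.
Import GRing.Theory.
Local Open Scope ring_scope.

Section Hecke.
Variables (K : fieldType) (d : nat).

Definition tensor (k : nat) := {ffun k.-tuple 'I_d -> K^o}.
HB.instance Definition _ k := GRing.Lmodule.on (tensor k).

Definition tprod k m (a : tensor k) (b : tensor m) : tensor (k + m) :=
  [ffun w : (k + m).-tuple 'I_d =>
     a [tuple tnth w (lshift m i) | i < k] * b [tuple tnth w (rshift k j) | j < m]].

Definition tcastT k m (e : k = m) (a : tensor k) : tensor m :=
  [ffun w : m.-tuple 'I_d => a (tcast (esym e) w)].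

(* R : V(x)V -> V(x)V given by its matrix in the basis e_i (x) e_j:
   (R x)(i,j) = sum_(a,b) Rc i j a b * x(a,b). *)
Definition coef := 'I_d -> 'I_d -> 'I_d -> 'I_d -> K.

Definition repl k (w : k.-tuple 'I_d) (p : nat) (a b : 'I_d) : k.-tuple 'I_d :=
  [tuple if val j == p then a else if val j == p.+1 then b else tnth w j | j < k].

(* action of id^{(x)p} (x) R (x) id^{(x)(k-p-2)} on T_k, i.e. of the Hecke
   generator T_(p+1) (0-based position p); identity if p+2 > k *)
Definition Tact (Rc : coef) k (p : nat) (x : tensor k) : tensor k :=
  [ffun w : k.-tuple 'I_d =>
     if (p.+1 < k)%N then
       \sum_(a < d) \sum_(b < d) Rc (nth a w p) (nth a w p.+1) a b * x (repl w p a b)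
     else x w].

Definition Rop (Rc : coef) : tensor 2 -> tensor 2 := Tact Rc 0.

Definition is_hecke (Rc : coef) (q : K) : Prop :=
  [/\ q != 0,
      (forall x : tensor 2, let y := Rop Rc x - q *: x in Rop Rc y + y = 0) &
      (forall x : tensor 3,
         Tact Rc 0 (Tact Rc 1 (Tact Rc 0 x)) = Tact Rc 1 (Tact Rc 0 (Tact Rc 1 x)))].

Fixpoint prodT (Rc : coef) k (j : nat) (x : tensor k) : tensor k :=
  match j with
  | 0 => x
  | j'.+1 => prodT Rc j' (Tact Rc j' x)
  end.

Definition yop (Rc : coef) (q : K) k (x : tensor k) : tensor k :=
  \sum_(j < k) (((-1) ^+ j * q ^+ (k.-1 - j)) *: prodT Rc j x).

Inductive span k (P : tensor k -> Prop) : tensor k -> Prop :=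
| span_gen x : P x -> span P x
| span0 : span P 0
| spanD x y : span P x -> span P y -> span P (x + y)
| spanZ (c : K) x : span P x -> span P (c *: x).

Definition Igen (Rc : coef) (q : K) n (t : tensor n) : Prop :=
  exists i m (e : i + 2 + m = n) (a : tensor i) (x : tensor 2) (b : tensor m),
    Rop Rc x = q *: x /\ t = tcastT e (tprod (tprod a x) b).

Definition Ideal (Rc : coef) (q : K) n : tensor n -> Prop := span (@Igen Rc q n).

Definition Lsp (Rc : coef) (q : K) n k (a : tensor k) : Prop :=
  exists hk : (k <= n)%N, forall b : tensor (n - k),
    Ideal Rc q (tcastT (subnKC hk) (tprod a b)).

Definition VL (Rc : coef) (q : K) n k : tensor k -> Prop :=
  span (fun t => exists (v : tensor 1) (l : tensor k.-1) (e : 1 + k.-1 = k),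
                   Lsp Rc q n l /\ t = tcastT e (tprod v l)).

End Hecke.

(* Main.v *)
Require Import Defs.
From HB Require Import structures.
From mathcomp Require Import all_boot all_algebra.
From mathcomp Require Import zify ring.
Set Implicit Arguments. Unset Strict Implicit. Unset Printing Implicit Defensive.
Import GRing.Theory.
Local Open Scope ring_scope.

Section Basic.
Variables (K : fieldType) (d : nat).
Local Notation tensor := (tensor K d).

Definition tev n (t : tensor n) (s : seq 'I_d) : K :=
  if insub s is Some w then t w else 0.

Lemma tevE n (t : tensor n) (w : n.-tuple 'I_d) : tev t w = t w.
Proof. by rewrite /tev valK. Qed.

Lemma tev_out n (t : tensor n) s : size s != n -> tev t s = 0.
Proof. by move=> h; rewrite /tev insubN. Qed.

Lemma tev_ext n (t1 t2 : tensor n) :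
  (forall s, size s = n -> tev t1 s = tev t2 s) -> t1 = t2.
Proof. by move=> h; apply/ffunP => w; rewrite -!tevE; apply: h; rewrite size_tuple. Qed.

Lemma tevD n (t1 t2 : tensor n) s : tev (t1 + t2) s = tev t1 s + tev t2 s.
Proof. by rewrite /tev; case: insub => [w|]; rewrite ?ffunE ?addr0. Qed.

Lemma tevZ n c (t : tensor n) s : tev (c *: t) s = c * tev t s.
Proof. by rewrite /tev; case: insub => [w|]; rewrite ?ffunE ?mulr0. Qed.

Lemma tev0 n s : tev (0 : tensor n) s = 0.
Proof. by rewrite /tev; case: insub => [w|]; rewrite ?ffunE. Qed.

Lemma tevN n (t : tensor n) s : tev (- t) s = - tev t s.
Proof. by rewrite /tev; case: insub => [w|]; rewrite ?ffunE ?oppr0. Qed.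

Lemma tevB n (t1 t2 : tensor n) s : tev (t1 - t2) s = tev t1 s - tev t2 s.
Proof. by rewrite tevD tevN. Qed.

Lemma tev_sum n I (r : seq I) (P : pred I) (F : I -> tensor n) s :
  tev (\sum_(i <- r | P i) F i) s = \sum_(i <- r | P i) tev (F i) s.
Proof.
elim/big_rec2: _ => [|i y t _ <-]; first by rewrite tev0.
by rewrite tevD.
Qed.

Definition mk n (f : seq 'I_d -> K) : tensor n := [ffun w : n.-tuple 'I_d => f (val w)].

Lemma tev_mk n f s : tev (mk n f) s = if size s == n then f s else 0.
Proof.
rewrite /tev; case: insubP => [w Hs <-|/negbTE ->]; last by [].
by rewrite ffunE size_tuple eqxx.
Qed.

Lemma tev_mkT n f s : size s = n -> tev (mk n f) s = f s.
Proof. by move=> h; rewrite tev_mk h eqxx. Qed.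

Lemma tev_tcastT k m (e : k = m) (a : tensor k) s : tev (tcastT e a) s = tev a s.
Proof.
subst m; rewrite /tev; case: insub => [w|//].
by rewrite ffunE -(tevE a) val_tcast /tev valK.
Qed.

Lemma eq_from_nth' (T : Type) (s1 s2 : seq T) : size s1 = size s2 ->
  (forall x0 i, (i < size s1)%N -> nth x0 s1 i = nth x0 s2 i) -> s1 = s2.
Proof.
case: s1 => [|x s1] Hs H; first by move: Hs H; case: s2.
exact: (eq_from_nth (x0 := x) Hs (H x)).
Qed.

Lemma val_mktake k m (w : (k + m).-tuple 'I_d) :
  val [tuple tnth w (lshift m i) | i < k] = take k w.
Proof.
apply: eq_from_nth'; first by rewrite size_tuple size_takel // size_tuple leq_addr.
move=> x0 i; rewrite size_tuple => hi.
by rewrite (nth_mktuple _ _ (Ordinal hi)) nth_take // (tnth_nth x0).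
Qed.

Lemma val_mkdrop k m (w : (k + m).-tuple 'I_d) :
  val [tuple tnth w (rshift k j) | j < m] = drop k w.
Proof.
apply: eq_from_nth'; first by rewrite size_tuple size_drop size_tuple; lia.
move=> x0 i; rewrite size_tuple => hi.
by rewrite (nth_mktuple _ _ (Ordinal hi)) nth_drop (tnth_nth x0).
Qed.

Lemma tev_tprod k m (a : tensor k) (b : tensor m) s :
  tev (tprod a b) s = if size s == (k + m)%N then tev a (take k s) * tev b (drop k s) else 0.
Proof.
rewrite /tev; case: insubP => [w Hs <-|/negbTE -> //].
rewrite ffunE size_tuple eqxx -val_mktake -val_mkdrop.
by rewrite !valK.
Qed.


Lemma nth_cat2 (T : Type) (x0 : T) u (a b : T) v (i : nat) :
  nth x0 (u ++ a :: b :: v) i =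
  if (i < size u)%N then nth x0 u i else if i == size u then a
  else if i == (size u).+1 then b else nth x0 v (i - (size u).+2).
Proof.
rewrite nth_cat; case: ltnP => // hi.
have [j ->] : exists j, i = (size u + j)%N by exists (i - size u)%N; lia.
rewrite addKn; case: j => [|[|j]]; rewrite ?addn0 ?eqxx //.
  by rewrite addn1 eqxx ifN //; lia.
rewrite ifN; last lia. rewrite ifN; last lia.
rewrite /=; congr nth; lia.
Qed.

Section Hecke.
Variable Rc : coef K d.

Lemma val_repl m (w : m.-tuple 'I_d) u (al be : 'I_d) v p a b :
  val w = u ++ al :: be :: v -> size u = p ->
  val (repl w p a b) = u ++ a :: b :: v.
Proof.
move=> Hw Hu.
apply: eq_from_nth'; first by rewrite size_tuple -(size_tuple w) Hw !size_cat.
move=> x0 i; rewrite size_tuple => hi.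
rewrite (nth_mktuple _ _ (Ordinal hi)) (tnth_nth x0) /= Hw !nth_cat2 -Hu.
case: ltnP => h1; first by rewrite !ifN //; lia.
by case: eqP => //; case: eqP.
Qed.

Lemma tev_Tact m p (x : tensor m) u al be v :
  size u = p -> size (u ++ al :: be :: v) = m ->
  tev (Tact Rc p x) (u ++ al :: be :: v) =
  \sum_(a < d) \sum_(b < d) Rc al be a b * tev x (u ++ a :: b :: v).
Proof.
move=> Hu Hs; have Hw : size (u ++ al :: be :: v) == m by apply/eqP.
rewrite -[u ++ _]/(val (Tuple Hw)) tevE ffunE.
have -> : (p.+1 < m)%N by rewrite -Hs size_cat /= -Hu; lia.
apply: eq_bigr => a _; apply: eq_bigr => b _.
rewrite -tevE (@val_repl m (Tuple Hw) u al be v p a b erefl Hu) /= !nth_cat2 -Hu ltnn eqxx.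
rewrite ltnNge leqnSn /= eqxx.
rewrite ifN //; lia.
Qed.

Lemma Tact_id m p (x : tensor m) : ~~ (p.+1 < m)%N -> Tact Rc p x = x.
Proof. by move/negbTE=> h; apply/ffunP=> w; rewrite ffunE h. Qed.


Lemma split2 (s : seq 'I_d) p : (p.+1 < size s)%N ->
  exists u al be v, size u = p /\ s = u ++ al :: be :: v.
Proof.
move=> h; exists (take p s).
have hd : (size (drop p s) >= 2)%N by rewrite size_drop; lia.
case E: (drop p s) hd => [|al [|be v]] // _.
exists al, be, v; split; first by rewrite size_takel //; lia.
by rewrite -E cat_take_drop.
Qed.

Lemma tact_ind m p (x : tensor m) (P : tensor m -> Prop) :
  (~~ (p.+1 < m)%N -> P x) -> ((p.+1 < m)%N -> P (Tact Rc p x)) -> P (Tact Rc p x).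
Proof. by case: ltnP => h H1 H2; [exact: H2 | rewrite Tact_id -?leqNgt //; exact: H1]. Qed.

Lemma TactD m p (x y : tensor m) : Tact Rc p (x + y) = Tact Rc p x + Tact Rc p y.
Proof.
case: (ltnP p.+1 m) => h; last by rewrite !Tact_id -?leqNgt.
apply: tev_ext => s Hs; rewrite tevD.
have := @split2 s p; rewrite Hs => /(_ h) [u [al [be [v [Hu Es]]]]].
rewrite Es in Hs *; rewrite !tev_Tact //.
under eq_bigr => a _ do (under eq_bigr => b _ do rewrite tevD mulrDr; rewrite big_split).
by rewrite big_split.
Qed.

Lemma TactZ m p c (x : tensor m) : Tact Rc p (c *: x) = c *: Tact Rc p x.
Proof.
case: (ltnP p.+1 m) => h; last by rewrite !Tact_id -?leqNgt.
apply: tev_ext => s Hs; rewrite tevZ.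
have := @split2 s p; rewrite Hs => /(_ h) [u [al [be [v [Hu Es]]]]].
rewrite Es in Hs *; rewrite !tev_Tact // mulr_sumr; apply: eq_bigr => a _.
rewrite mulr_sumr; apply: eq_bigr => b _.
by rewrite tevZ mulrCA.
Qed.

End Hecke.

Section Lin.
Definition islin m m' (f : tensor m -> tensor m') :=
  (forall x y, f (x + y) = f x + f y) /\ (forall c x, f (c *: x) = c *: f x).

Lemma lin0 m m' (f : tensor m -> tensor m') : islin f -> f 0 = 0.
Proof. by case=> _ hZ; rewrite -(scale0r 0) hZ scale0r. Qed.

Lemma linB m m' (f : tensor m -> tensor m') x y : islin f -> f (x - y) = f x - f y.
Proof. by case=> hD hZ; rewrite hD -scaleN1r hZ scaleN1r. Qed.

Lemma lin_sum m m' (f : tensor m -> tensor m') I (r : seq I) (P : pred I) F :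
  islin f -> f (\sum_(i <- r | P i) F i) = \sum_(i <- r | P i) f (F i).
Proof. move=> hf; apply: (big_morph f (proj1 hf) (lin0 hf)). Qed.

Lemma lin_comp m m' m'' (f : tensor m -> tensor m') (g : tensor m' -> tensor m'') :
  islin f -> islin g -> islin (fun x => g (f x)).
Proof. by case=> fD fZ [gD gZ]; rewrite /islin; split=> *; rewrite ?fD ?fZ ?gD ?gZ. Qed.

Lemma span_lin m m' (f : tensor m -> tensor m') (P : tensor m -> Prop) (Q : tensor m' -> Prop) x :
  islin f -> (forall y, P y -> Defs.span Q (f y)) -> Defs.span P x -> Defs.span Q (f x).
Proof.
move=> [fD fZ] H; elim=> [y Py|||c y _ IH].
- exact: H.
- by rewrite (lin0 (conj fD fZ)); apply: span0.
- by move=> y z _ IH1 _ IH2; rewrite fD; apply: spanD.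
- by rewrite fZ; apply: spanZ.
Qed.

Lemma span_sum m (P : tensor m -> Prop) I (r : seq I) (Q : pred I) F :
  (forall i, Q i -> Defs.span P (F i)) -> Defs.span P (\sum_(i <- r | Q i) F i).
Proof.
move=> H; elim/big_ind: _ => //; first exact: span0.
by move=> *; apply: spanD.
Qed.

Lemma span_mono m (P Q : tensor m -> Prop) x :
  (forall y, P y -> Q y) -> Defs.span P x -> Defs.span Q x.
Proof.
move=> H; elim=> [y Py|||c y _ IH].
- by apply: span_gen; apply: H.
- exact: span0.
- by move=> y z _ IH1 _ IH2; apply: spanD.
- exact: spanZ.
Qed.

Lemma span_sub m (P : tensor m -> Prop) x y :
  Defs.span P x -> Defs.span P y -> Defs.span P (x - y).
Proof. by move=> hx hy; apply: spanD => //; rewrite -scaleN1r; apply: spanZ. Qed.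

End Lin.

Ltac szs := rewrite /=; repeat (rewrite !size_cat /=);
  repeat match goal with H : context[size (_ ++ _)] |- _ => rewrite !size_cat /= in H end; lia.

Section Rel.
Variables (Rc : coef K d) (q : K).

Lemma Tact_lin m p : islin (@Tact K d Rc m p).
Proof. by split=> *; rewrite ?TactD ?TactZ. Qed.

Lemma TactB m p (x y : tensor m) : Tact Rc p (x - y) = Tact Rc p x - Tact Rc p y.
Proof. exact: (linB _ _ (Tact_lin m p)). Qed.

Definition loc2 m (x : tensor m) u v : tensor 2 := mk 2 (fun ab => tev x (u ++ ab ++ v)).
Definition loc3 m (x : tensor m) u v : tensor 3 := mk 3 (fun ab => tev x (u ++ ab ++ v)).

Lemma tev_loc2 m (x : tensor m) u v a b : tev (loc2 x u v) [:: a; b] = tev x (u ++ a :: b :: v).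
Proof. by rewrite tev_mkT. Qed.

Lemma tev_loc3 m (x : tensor m) u v a b c :
  tev (loc3 x u v) [:: a; b; c] = tev x (u ++ a :: b :: c :: v).
Proof. by rewrite tev_mkT. Qed.

Lemma loc2_lin m (u v : seq 'I_d) : islin (fun x : tensor m => loc2 x u v).
Proof.
split=> *; apply: tev_ext => s Hs; rewrite !tev_mkT // ?tevD ?tevZ ?tev_mkT //.
Qed.

Lemma loc3_lin m (u v : seq 'I_d) : islin (fun x : tensor m => loc3 x u v).
Proof.
split=> *; apply: tev_ext => s Hs; rewrite !tev_mkT // ?tevD ?tevZ ?tev_mkT //.
Qed.

Lemma size2 (s : seq 'I_d) : size s = 2 -> exists a b, s = [:: a; b].
Proof. by case: s => [|a [|b [|]]] // _; exists a, b. Qed.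

Lemma size3 (s : seq 'I_d) : size s = 3 -> exists a b c, s = [:: a; b; c].
Proof. by case: s => [|a [|b [|c [|]]]] // _; exists a, b, c. Qed.

Lemma loc2T m p (x : tensor m) u v : size u = p -> (size u + 2 + size v)%N = m ->
  loc2 (Tact Rc p x) u v = Tact Rc 0 (loc2 x u v).
Proof.
move=> Hu Hm; apply: tev_ext => s /size2 [al [be ->]].
rewrite tev_loc2 tev_Tact ; try by szs.
rewrite (@tev_Tact Rc 2 0 _ [::] al be [::]) //.
by apply: eq_bigr => a _; apply: eq_bigr => b _; rewrite tev_loc2.
Qed.

Lemma loc3T0 m p (x : tensor m) u v : size u = p -> (size u + 3 + size v)%N = m ->
  loc3 (Tact Rc p x) u v = Tact Rc 0 (loc3 x u v).
Proof.
move=> Hu Hm; apply: tev_ext => s /size3 [a1 [a2 [a3 ->]]].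
rewrite tev_loc3 tev_Tact ; try by szs.
rewrite (@tev_Tact Rc 3 0 _ [::] a1 a2 [:: a3]) //.
by apply: eq_bigr => a _; apply: eq_bigr => b _; rewrite tev_loc3.
Qed.

Lemma loc3T1 m p (x : tensor m) u v : size u = p -> (size u + 3 + size v)%N = m ->
  loc3 (Tact Rc p.+1 x) u v = Tact Rc 1 (loc3 x u v).
Proof.
move=> Hu Hm; apply: tev_ext => s /size3 [a1 [a2 [a3 ->]]].
rewrite tev_loc3.
have -> : u ++ [:: a1, a2, a3 & v] = (u ++ [:: a1]) ++ [:: a2, a3 & v] by rewrite -catA.
rewrite tev_Tact; try by szs.
rewrite (@tev_Tact Rc 3 1 _ [:: a1] a2 a3 [::]) //.
by apply: eq_bigr => a _; apply: eq_bigr => b _; rewrite tev_loc3 -catA.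
Qed.


Lemma split3 (s : seq 'I_d) p : (p.+2 < size s)%N ->
  exists u a1 a2 a3 v, size u = p /\ s = u ++ a1 :: a2 :: a3 :: v.
Proof.
move=> h; have [u [al [be [w [Hu Es]]]]] := @split2 s p (ltnW h).
case: w Es => [|a3 v] Es; first by move: h; rewrite Es size_cat /= Hu; lia.
by exists u, al, be, a3, v.
Qed.

Lemma Tcomm m p r (x : tensor m) : (p.+2 <= r)%N -> (r.+1 < m)%N ->
  Tact Rc p (Tact Rc r x) = Tact Rc r (Tact Rc p x).
Proof.
move=> hpr hrm; apply: tev_ext => s Hs.
have := @split2 s r; rewrite Hs => /(_ hrm) [U [b1 [b2 [w [HU Es]]]]].
have := @split2 U p; rewrite HU => /(_ (ltac:(lia))) [u [a1 [a2 [v [Hu EU]]]]].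
rewrite EU in HU; rewrite Es EU in Hs *.
rewrite (@tev_Tact Rc m r _ (u ++ [:: a1, a2 & v]) b1 b2 w) ; try by szs.
rewrite -catA /= (@tev_Tact Rc m p _ u a1 a2 (v ++ [:: b1, b2 & w])) ; try by szs.
have E1 a b : tev (Tact Rc r x) (u ++ [:: a, b & v ++ [:: b1, b2 & w]]) =
    \sum_(c < d) \sum_(e < d) Rc b1 b2 c e * tev x (u ++ [:: a, b & v ++ [:: c, e & w]]).
  have -> : u ++ [:: a, b & v ++ [:: b1, b2 & w]] = (u ++ [:: a, b & v]) ++ [:: b1, b2 & w] by rewrite -catA.
  rewrite tev_Tact; try by szs.
  by apply: eq_bigr => c _; apply: eq_bigr => e _; rewrite -catA.
have E2 c e : tev (Tact Rc p x) ((u ++ [:: a1, a2 & v]) ++ [:: c, e & w]) =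
    \sum_(a < d) \sum_(b < d) Rc a1 a2 a b * tev x (u ++ [:: a, b & v ++ [:: c, e & w]]).
  by rewrite -catA tev_Tact; try by szs.
etransitivity.
  apply: eq_bigr => a _; apply: eq_bigr => b _; rewrite E1 mulr_sumr.
  by apply: eq_bigr => c _; rewrite mulr_sumr.
symmetry; etransitivity.
  apply: eq_bigr => a _; apply: eq_bigr => b _; rewrite E2 mulr_sumr.
  by apply: eq_bigr => c _; rewrite mulr_sumr.
symmetry.
under eq_bigr => a _ do rewrite exchange_big /=.
rewrite exchange_big /=.
under eq_bigr => c _ do under eq_bigr => a _ do rewrite exchange_big /=.
under eq_bigr => c _ do rewrite exchange_big /=.
apply: eq_bigr => c _; apply: eq_bigr => e _; apply: eq_bigr => a _; apply: eq_bigr => b _.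
by rewrite mulrCA.
Qed.

Section Hyp.
Hypothesis Hquad : forall x : tensor 2, let y := Rop Rc x - q *: x in Rop Rc y + y = 0.
Hypothesis Hbraid : forall x : tensor 3,
  Tact Rc 0 (Tact Rc 1 (Tact Rc 0 x)) = Tact Rc 1 (Tact Rc 0 (Tact Rc 1 x)).

Lemma quad2 (x : tensor 2) : Tact Rc 0 (Tact Rc 0 x) = (q - 1) *: Tact Rc 0 x + q *: x.
Proof.
have H := Hquad x; rewrite /Rop /= TactB TactZ in H.
apply: tev_ext => s _; have := f_equal (fun t => tev t s) H.
rewrite !(tevD, tevN, tevZ, tev0) => H'.
rewrite -[LHS]subr0 -H'; ring.
Qed.

Lemma Tquad m p (x : tensor m) : (p.+1 < m)%N ->
  Tact Rc p (Tact Rc p x) = (q - 1) *: Tact Rc p x + q *: x.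
Proof.
move=> h; apply: tev_ext => s Hs.
have := @split2 s p; rewrite Hs => /(_ h) [u [al [be [v [Hu Es]]]]].
rewrite Es in Hs *.
have Hm : (size u + 2 + size v)%N = m by move: Hs; szs.
rewrite -[LHS]tev_loc2 (loc2T _ Hu Hm) (loc2T _ Hu Hm) quad2 tevD !tevZ -(loc2T _ Hu Hm).
by rewrite !tev_loc2 tevD !tevZ.
Qed.

Lemma Tbraid m p (x : tensor m) : (p.+2 < m)%N ->
  Tact Rc p (Tact Rc p.+1 (Tact Rc p x)) = Tact Rc p.+1 (Tact Rc p (Tact Rc p.+1 x)).
Proof.
move=> h; apply: tev_ext => s Hs.
have := @split3 s p; rewrite Hs => /(_ h) [u [a1 [a2 [a3 [v [Hu Es]]]]]].
rewrite Es in Hs *.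
have Hm : (size u + 3 + size v)%N = m by move: Hs; szs.
rewrite -[LHS]tev_loc3 -[RHS]tev_loc3.
by rewrite !(loc3T0 _ Hu Hm, loc3T1 _ Hu Hm) Hbraid.
Qed.


Lemma prodT_lin m j : islin (@prodT K d Rc m j).
Proof.
elim: j => [|j IH] /=; first by split.
exact: (lin_comp (Tact_lin m j) IH).
Qed.

Lemma prodT_T0 m j r (x : tensor m) : (j < r)%N ->
  prodT Rc j (Tact Rc r x) = Tact Rc r (prodT Rc j x).
Proof.
case: (ltnP r.+1 m) => hrm; last first.
  by move=> _; rewrite !Tact_id -?leqNgt.
elim: j x => [|j IH] x hj //=.
rewrite Tcomm //.
by rewrite IH //; lia.
Qed.

Lemma prodT_T1 m j p (x : tensor m) : (p.+1 < j)%N -> (j < m)%N ->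
  prodT Rc j (Tact Rc p x) = Tact Rc p.+1 (prodT Rc j x).
Proof.
elim: j x => [|j IH] x // hpj hjm /=.
case: (ltngtP p.+1 j) => hp.
- rewrite -(@Tcomm m p j x); try lia.
  by rewrite IH //; lia.
- lia.
- subst j; rewrite /=.
  rewrite Tbraid; last lia.
  by rewrite prodT_T0.
Qed.

Definition Kp m p (x : tensor m) := (p.+1 < m)%N /\ Tact Rc p x = q *: x.

Lemma prodT_K0 m j r (x : tensor m) : (j < r)%N -> Kp r x -> Kp r (prodT Rc j x).
Proof.
move=> hj [hr Hx]; split => //.
by rewrite -prodT_T0 // Hx (proj2 (prodT_lin m j)).
Qed.

Lemma prodT_K1 m j p (x : tensor m) : (p.+1 < j)%N -> (j < m)%N -> Kp p x -> Kp p.+1 (prodT Rc j x).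
Proof.
move=> hj hjm [hr Hx]; split; first lia.
by rewrite -prodT_T1 // Hx (proj2 (prodT_lin m j)).
Qed.

Hypothesis Hq : q != 0.

Lemma Tact_surj m p (y : tensor m) : exists x, Tact Rc p x = y.
Proof.
case: (ltnP p.+1 m) => h; last by exists y; rewrite Tact_id -?leqNgt.
exists (q^-1 *: (Tact Rc p y - (q - 1) *: y)).
rewrite TactZ TactB TactZ Tquad //.
apply: tev_ext => s _; rewrite !(tevZ, tevB, tevD).
by field.
Qed.

Lemma prodT_surj m j (y : tensor m) : exists x, prodT Rc j x = y.
Proof.
elim: j y => [|j IH] y; first by exists y.
have [z Hz] := IH y; have [x Hx] := Tact_surj j z.
by exists x; rewrite /= Hx.
Qed.


Definition slice N (i : 'I_d) (t : tensor N.+1) : tensor N := mk N (fun s => tev t (i :: s)).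

Lemma tev_slice N i (t : tensor N.+1) s : tev (slice i t) s = tev t (i :: s).
Proof. rewrite tev_mk; case: eqP => // h; rewrite tev_out //=; apply/eqP; lia. Qed.

Lemma slice_lin N i : islin (@slice N i).
Proof. by split=> *; apply: tev_ext => s Hs; rewrite ?tevD ?tevZ !tev_slice ?tevD ?tevZ. Qed.

Lemma sliceT N i p (t : tensor N.+1) : slice i (Tact Rc p.+1 t) = Tact Rc p (slice i t).
Proof.
case: (ltnP p.+1 N) => h; last by rewrite !Tact_id -?leqNgt //; lia.
apply: tev_ext => s Hs.
have := @split2 s p; rewrite Hs => /(_ h) [u [al [be [v [Hu Es]]]]].
rewrite Es in Hs *; rewrite tev_slice // -cat_cons tev_Tact; try by szs.
rewrite tev_Tact //; apply: eq_bigr => a _; apply: eq_bigr => b _.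
by rewrite tev_slice //; szs.
Qed.

Lemma slice_K N i p (t : tensor N.+1) : Kp p.+1 t -> Kp p (slice i t).
Proof. by case=> h Ht; split; [lia | rewrite -sliceT Ht (proj2 (slice_lin N i))]. Qed.

Definition delta n (u : seq 'I_d) : tensor n := mk n (fun s => (s == u)%:R).

Lemma tev_delta n u s : size s = n -> tev (delta n u) s = (s == u)%:R.
Proof. exact: tev_mkT. Qed.

Lemma sum_delta n (r : seq 'I_d) (G : seq 'I_d -> K) :
  \sum_(w : n.-tuple 'I_d) (r == val w)%:R * G (val w) = (size r == n)%:R * G r.
Proof.
case: (eqVneq (size r) n) => h0.
  have h : size r == n by apply/eqP.
  rewrite mul1r (bigD1 (Tuple h)) //= eqxx mul1r big1 ?Monoid.mulm1 // => w hw.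
  case: eqP => [E|]; last by rewrite mul0r.
  by move: hw; rewrite (_ : w = Tuple h) ?eqxx //; apply: val_inj.
rewrite mul0r big1 // => w _; case: eqP => [E|]; last by rewrite mul0r.
by move: h0; rewrite E size_tuple eqxx.
Qed.

Lemma tev_gen i m N (e : (i + 2 + m)%N = N) (a : tensor i) (x : tensor 2) (b : tensor m)
  u al be v : size u = i -> size v = m ->
  tev (tcastT e (tprod (tprod a x) b)) (u ++ al :: be :: v) = tev a u * tev x [:: al; be] * tev b v.
Proof.
move=> Hu Hv; rewrite tev_tcastT tev_tprod size_cat /= Hu Hv.
rewrite (_ : (i + m.+2)%N = (i + 2 + m)%N); last lia.
rewrite eqxx tev_tprod.
have -> : take (i + 2) (u ++ [:: al, be & v]) = u ++ [:: al; be].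
  rewrite take_cat -Hu ltnNge leq_addr /=.
  have -> : (size u + 2 - size u = 2)%N by lia.
  by rewrite ?take_cons ?drop_cons ?take0 ?drop0.
have -> : drop (i + 2) (u ++ [:: al, be & v]) = v.
  rewrite drop_cat -Hu ltnNge leq_addr /=.
  have -> : (size u + 2 - size u = 2)%N by lia.
  by rewrite ?take_cons ?drop_cons ?take0 ?drop0.
by rewrite size_cat Hu /= eqxx take_size_cat // drop_size_cat.
Qed.

Lemma Igen_K N (t : tensor N) : Igen Rc q t -> exists p, Kp p t.
Proof.
case=> i [m [e [a [x [b [Hx ->]]]]]]; exists i; split; first by subst N; lia.
apply: tev_ext => s Hs.
have := @split2 s i; rewrite Hs => /(_ (ltac:(lia))) [u [al [be [v [Hu Es]]]]].
have Hv : size v = m by move: Hs; rewrite Es; szs.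
rewrite Es in Hs *; rewrite tev_Tact // tevZ tev_gen //.
under eq_bigr => a' _ do under eq_bigr => b' _ do rewrite tev_gen // mulrCA mulrA.
under eq_bigr => a' _ do rewrite -mulr_suml.
rewrite -mulr_suml.
have HR := f_equal (fun t => tev t [:: al; be]) Hx.
rewrite /Rop tevZ (@tev_Tact Rc 2 0 x [::] al be [::]) //= in HR.
transitivity (tev a u * (\sum_(i0 < d) \sum_(i1 < d) Rc al be i0 i1 * tev x [:: i0; i1]) * tev b v).
  congr (_ * _); rewrite mulr_sumr; apply: eq_bigr => i0 _.
  by rewrite mulr_sumr; apply: eq_bigr => i1 _; ring.
by rewrite HR; ring.
Qed.


Lemma sum_delta2 n1 n2 (r1 r2 : seq 'I_d) (F : seq 'I_d -> seq 'I_d -> K) :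
  size r1 = n1 -> size r2 = n2 ->
  \sum_(u : n1.-tuple 'I_d) \sum_(v : n2.-tuple 'I_d)
     (r1 == val u)%:R * F (val u) (val v) * (r2 == val v)%:R = F r1 r2.
Proof.
move=> h1 h2.
transitivity (\sum_(u : n1.-tuple 'I_d) (r1 == val u)%:R * F (val u) r2).
  apply: eq_bigr => u _.
  transitivity ((r1 == val u)%:R * \sum_(v : n2.-tuple 'I_d) (r2 == val v)%:R * F (val u) (val v)).
    by rewrite mulr_sumr; apply: eq_bigr => v _; ring.
  by rewrite sum_delta h2 eqxx mul1r.
by rewrite (@sum_delta n1 r1 (fun w => F w r2)) h1 eqxx mul1r.
Qed.

Lemma K_Ideal N p (t : tensor N) : Kp p t -> Ideal Rc q t.
Proof.
case=> hp Ht.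
have e : (p + 2 + (N - p.+2) = N)%N by lia.
have -> : t = \sum_(u : p.-tuple 'I_d) \sum_(v : (N - p.+2).-tuple 'I_d)
   tcastT e (tprod (tprod (delta p u) (loc2 t u v)) (delta (N - p.+2) v)).
  apply: tev_ext => s Hs.
  have := @split2 s p; rewrite Hs => /(_ hp) [u0 [al [be [v0 [Hu Es]]]]].
  have Hv : size v0 = (N - p.+2)%N by move: Hs; rewrite Es; szs.
  rewrite Es tev_sum.
  under eq_bigr => u _ do (rewrite tev_sum; under eq_bigr => v _ do
    rewrite tev_gen ?size_tuple // tev_delta ?size_tuple // tev_loc2 tev_delta ?size_tuple //).
  by rewrite (@sum_delta2 p (N - p.+2) u0 v0 (fun u v => tev t (u ++ [:: al, be & v]))).
apply: span_sum => u _; apply: span_sum => v _; apply: span_gen.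
exists p, (N - p.+2)%N, e, (delta p u), (loc2 t u v), (delta (N - p.+2) v); split => //.
rewrite /Rop -(@loc2T N p t u v) ?size_tuple //; try lia.
by rewrite Ht (proj2 (loc2_lin N u v)).
Qed.

Lemma Ideal_Kspan N (t : tensor N) : Ideal Rc q t -> Defs.span (fun x => exists p, Kp p x) t.
Proof. by apply: span_mono => x /Igen_K. Qed.

Lemma Kspan_Ideal N (t : tensor N) : Defs.span (fun x => exists p, Kp p x) t -> Ideal Rc q t.
Proof.
elim=> [y [p Hp]|||c y _ IH].
- exact: K_Ideal Hp.
- exact: span0.
- by move=> y z _ H1 _ H2; apply: spanD.
- exact: spanZ.
Qed.

Definition Wt N (t : tensor N.+1) := forall i, Ideal Rc q (slice i t).

Lemma span_W N (P : tensor N.+1 -> Prop) t : (forall x, P x -> Wt x) -> Defs.span P t -> Wt t.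
Proof.
move=> H Ht i; apply: (span_lin (slice_lin N i) _ Ht).
by move=> y /H; apply.
Qed.

Lemma K_W N p (t : tensor N.+1) : Kp p.+1 t -> Wt t.
Proof. by move=> Ht i; apply: (K_Ideal (slice_K i Ht)). Qed.


Definition mkP N k m' (a : tensor k) (b : tensor m') : tensor N :=
  mk N (fun s => tev a (take k s) * tev b (drop k s)).

Lemma tev_mkP N k m' (a : tensor k) (b : tensor m') s : size s = N ->
  tev (mkP N a b) s = tev a (take k s) * tev b (drop k s).
Proof. exact: tev_mkT. Qed.

Lemma mkP_tprod k m' N (e : (k + m')%N = N) (a : tensor k) (b : tensor m') :
  tcastT e (tprod a b) = mkP N a b.
Proof.
apply: tev_ext => s Hs; rewrite tev_tcastT tev_tprod tev_mkP // Hs e eqxx //.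
Qed.

Lemma mkP_linl N k m' (b : tensor m') : islin (fun a : tensor k => mkP N a b).
Proof. by split=> *; apply: tev_ext => s Hs; rewrite ?tevD ?tevZ !tev_mkP // ?tevD ?tevZ; ring. Qed.

Lemma mkP_linr N k m' (a : tensor k) : islin (fun b : tensor m' => mkP N a b).
Proof. by split=> *; apply: tev_ext => s Hs; rewrite ?tevD ?tevZ !tev_mkP // ?tevD ?tevZ; ring. Qed.

Lemma take_cat2 k (u : seq 'I_d) al be v : ((size u).+2 <= k)%N ->
  take k (u ++ al :: be :: v) = u ++ al :: be :: take (k - (size u).+2) v.
Proof.
move=> h; rewrite take_cat ltnNge (leq_trans (leqnSn _) (ltnW h)) /=.
have -> : (k - size u = (k - (size u).+2).+2)%N by lia.
by rewrite !take_cons.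
Qed.

Lemma drop_cat2 k (u : seq 'I_d) al be v : ((size u).+2 <= k)%N ->
  drop k (u ++ al :: be :: v) = drop (k - (size u).+2) v.
Proof.
move=> h; rewrite drop_cat ltnNge (leq_trans (leqnSn _) (ltnW h)) /=.
have -> : (k - size u = (k - (size u).+2).+2)%N by lia.
by rewrite !drop_cons.
Qed.

Lemma TactL N k m' p (a : tensor k) (b : tensor m') : (p.+1 < k)%N -> (k + m')%N = N ->
  Tact Rc p (mkP N a b) = mkP N (Tact Rc p a) b.
Proof.
move=> hp hN; apply: tev_ext => s Hs.
have := @split2 s p; rewrite Hs => /(_ (ltac:(lia))) [u [al [be [v [Hu Es]]]]].
rewrite Es in Hs *.
have hk : ((size u).+2 <= k)%N by lia.
rewrite tev_Tact // tev_mkP // take_cat2 // drop_cat2 //.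
rewrite tev_Tact //; last first.
  rewrite size_cat /= size_take; move: Hs; rewrite size_cat /=. case: ltnP; lia.
rewrite mulr_suml; apply: eq_bigr => a' _; rewrite mulr_suml; apply: eq_bigr => b' _.
rewrite tev_mkP; last by move: Hs; szs.
by rewrite take_cat2 // drop_cat2 // mulrA.
Qed.

Lemma takel_cat' (u w : seq 'I_d) k : (k <= size u)%N -> take k (u ++ w) = take k u.
Proof. exact: takel_cat. Qed.

Lemma dropl_cat (u w : seq 'I_d) k : (k <= size u)%N -> drop k (u ++ w) = drop k u ++ w.
Proof.
move=> h; rewrite drop_cat; case: ltnP => h' //.
have -> : k = size u by lia.
by rewrite subnn drop0 drop_size.
Qed.

Lemma TactR N k m' p (a : tensor k) (b : tensor m') : (k + m')%N = N ->
  Tact Rc (k + p) (mkP N a b) = mkP N a (Tact Rc p b).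
Proof.
move=> hN; case: (ltnP p.+1 m') => hp; last by rewrite !Tact_id //; rewrite -leqNgt; lia.
apply: tev_ext => s Hs.
have := @split2 s (k + p); rewrite Hs => /(_ (ltac:(lia))) [u [al [be [v [Hu Es]]]]].
rewrite Es in Hs *.
have hku : (k <= size u)%N by lia.
rewrite tev_Tact // tev_mkP // takel_cat' // dropl_cat //.
rewrite tev_Tact //; last first.
  by rewrite size_cat size_drop /=; move: Hs; szs.
  by rewrite size_drop; lia.
rewrite mulr_sumr; apply: eq_bigr => a' _; rewrite mulr_sumr; apply: eq_bigr => b' _.
rewrite tev_mkP; last by move: Hs; szs.
by rewrite takel_cat' // dropl_cat // mulrCA.
Qed.

Lemma prodTL N k m' j (a : tensor k) (b : tensor m') : (j < k)%N -> (k + m')%N = N ->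
  prodT Rc j (mkP N a b) = mkP N (prodT Rc j a) b.
Proof.
elim: j a => [|j IH] a hj hN //=.
by rewrite TactL // IH //; lia.
Qed.

Fixpoint sprod m k i (z : tensor m) : tensor m :=
  match i with 0 => z | i'.+1 => sprod k i' (Tact Rc (k + i') z) end.

Lemma sprodR N k m' i (a : tensor k) (b : tensor m') : (k + m')%N = N ->
  sprod k i (mkP N a b) = mkP N a (prodT Rc i b).
Proof. by move=> hN; elim: i a b => [|i IH] a b //=; rewrite TactR // IH. Qed.

Lemma prodT_split m k i (z : tensor m) : prodT Rc (k + i) z = prodT Rc k (sprod k i z).
Proof. by elim: i z => [|i IH] z /=; rewrite ?addn0 // addnS /= IH. Qed.


Lemma Wt_lin N M (f : tensor M -> tensor N.+1) (P : tensor M -> Prop) z :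
  islin f -> (forall y, P y -> Wt (f y)) -> Defs.span P z -> Wt (f z).
Proof.
move=> hf H Hz; apply: (@span_W N (@Wt N) (f z)) => //.
exact: (span_lin hf (fun y Py => span_gen (H y Py)) Hz).
Qed.

Lemma Wt_D N (x y : tensor N.+1) : Wt x -> Wt y -> Wt (x + y).
Proof. by move=> hx hy i; rewrite (proj1 (slice_lin N i)); exact: (spanD (hx i) (hy i)). Qed.

Lemma Wt_Z N c (x : tensor N.+1) : Wt x -> Wt (c *: x).
Proof. by move=> hx i; rewrite (proj2 (slice_lin N i)); exact: (spanZ c (hx i)). Qed.

Lemma yop_lin m : islin (@yop K d Rc q m).
Proof.
split=> [x y|c x]; rewrite /yop.
  rewrite -big_split /=; apply: eq_bigr => j _.
  by rewrite (proj1 (prodT_lin m j)) scalerDr.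
rewrite scaler_sumr; apply: eq_bigr => j _.
by rewrite (proj2 (prodT_lin m j)) !scalerA mulrC.
Qed.

Lemma span_sum_nat m (P : tensor m -> Prop) a b (F : nat -> tensor m) :
  (forall i, (a <= i < b)%N -> Defs.span P (F i)) -> Defs.span P (\sum_(a <= i < b) F i).
Proof.
move=> H; rewrite big_nat_cond; apply: span_sum => i /andP [hi _]; exact: H.
Qed.

Lemma yop_W N p (z : tensor N.+1) : Kp p z -> Wt (yop Rc q z).
Proof.
move=> Hz; have [hp Tz] := Hz.
apply: (@span_W N (fun x => exists p', Kp p'.+1 x)); first by move=> x [p' /K_W].
rewrite /yop /=.
pose f j := ((-1) ^+ j * q ^+ (N - j)) *: prodT Rc j z.
rewrite -(big_mkord xpredT f) (@big_cat_nat _ _ _ p 0 N.+1); [|lia|lia].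
rewrite (@big_cat_nat _ _ _ p.+2 p N.+1); [|lia|lia].
have E : \sum_(p <= j < p.+2) f j = 0.
  rewrite big_ltn // big_ltn // big_geq // addr0.
  rewrite /f [prodT _ p.+1 _]/= Tz (proj2 (prodT_lin _ p)) scalerA -scalerDl.
  have -> : (N - p = (N - p.+1).+1)%N by lia.
  by rewrite !exprS; apply/eqP; rewrite scaler_eq0; apply/orP; left; apply/eqP; ring.
apply: spanD; last apply: spanD.
- apply: span_sum_nat => j /andP [_ hj].
  apply: spanZ; apply: span_gen; case: p hp Tz Hz hj E => [|p'] hp Tz Hz hj E; first by [].
  by exists p'; apply: prodT_K0.
- have H0 := (@span0 _ _ _ (fun x : tensor N.+1 => exists p' : nat, Kp p'.+1 x)).
  by rewrite -E in H0.
- apply: span_sum_nat => j /andP [hj1 hj2].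
  by apply: spanZ; apply: span_gen; exists p; apply: prodT_K1.
Qed.

Definition KL N (x : tensor N.+1) := exists p, (p.+1 < N)%N /\ Kp p x.

Lemma prodTN_W N (z : tensor N.+1) : Defs.span (@KL N) z -> Wt (prodT Rc N z).
Proof.
apply: Wt_lin; first exact: prodT_lin.
by move=> y [p [hp Hy]]; exact: (K_W (prodT_K1 hp (ltnSn N) Hy)).
Qed.


Lemma Lsp_KL N k m' (a : tensor k) (u : tensor m') : (k + m')%N = N.+1 ->
  Lsp Rc q N a -> Defs.span (@KL N) (mkP N.+1 a u).
Proof.
move=> hm [hk Ha].
pose ls (j : 'I_d) : tensor (N - k) := mk (N - k) (fun s => tev u (rcons s j)).
have -> : mkP N.+1 a u = \sum_(j < d) mkP N.+1 (mkP N a (ls j)) (delta 1 [:: j]).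
  apply: tev_ext => s Hs.
  case/lastP: s Hs => [|s' jl] Hs; first by [].
  have Hs' : size s' = N by rewrite size_rcons in Hs; lia.
  have Et : take N (rcons s' jl) = s' by rewrite -cats1 take_size_cat.
  have Ed : drop N (rcons s' jl) = [:: jl] by rewrite -cats1 drop_size_cat.
  rewrite tev_mkP // tev_sum (bigD1 jl) // big1 ?Monoid.mulm1; last first.
    move=> j hj; rewrite tev_mkP // Ed tev_delta // (_ : ([:: jl] == [:: j]) = false) ?mulr0 //.
    by apply/negbTE; move: hj; apply: contra => /eqP [->].
  rewrite tev_mkP // Et Ed tev_delta // eqxx mulr1 tev_mkP // tev_mkT; last first.
    by rewrite size_drop; lia.
  by rewrite -!cats1 takel_cat' ?dropl_cat //; lia.
apply: span_sum => j _.
have Hj := Ha (ls j); rewrite mkP_tprod in Hj.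
apply: (@span_lin _ _ (fun y => mkP N.+1 y (delta 1 [:: j])) _ (@KL N) _ (@mkP_linl N.+1 N 1 (delta 1 [:: j])) _ (Ideal_Kspan Hj)).
move=> y [p [hp Hy]]; apply: span_gen; exists p; split => //; split; first lia.
by rewrite TactL // ?addn1 // Hy (proj2 (@mkP_linl N.+1 N 1 _)).
Qed.

Lemma front_dec k' (t : tensor k'.+1) : t = \sum_(i < d) mkP k'.+1 (delta 1 [:: i]) (slice i t).
Proof.
apply: tev_ext => s Hs; case: s Hs => [|i0 s'] Hs //.
rewrite tev_sum (bigD1 i0) // big1 ?Monoid.mulm1; last first.
  move=> j hj; rewrite tev_mkP // (_ : take 1 (i0 :: s') = [:: i0]); last by rewrite /= take0.
  rewrite tev_delta //.
  rewrite (_ : ([:: i0] == [:: j]) = false) ?mul0r //.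
  by apply/negbTE; move: hj; apply: contra => /eqP [->].
rewrite tev_mkP // (_ : take 1 (i0 :: s') = [:: i0]); last by rewrite /= take0.
rewrite (_ : drop 1 (i0 :: s') = s'); last by rewrite /= drop0.
by rewrite tev_delta // eqxx mul1r tev_slice.
Qed.

Lemma slice_mkP N k' m' i (a : tensor k'.+1) (b : tensor m') :
  slice i (mkP N.+1 a b) = mkP N (slice i a) b.
Proof.
apply: tev_ext => s Hs.
by rewrite tev_slice !tev_mkP //= ?Hs // tev_slice.
Qed.


Lemma mkP_suml N k m' (b : tensor m') I (r : seq I) (P : pred I) (F : I -> tensor k) :
  mkP N (\sum_(i <- r | P i) F i) b = \sum_(i <- r | P i) mkP N (F i) b.
Proof. exact: (@lin_sum k N (fun x => mkP N x b) I r P F (@mkP_linl N k m' b)). Qed.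

Lemma mkP_sumr N k m' (a : tensor k) I (r : seq I) (P : pred I) (F : I -> tensor m') :
  mkP N a (\sum_(i <- r | P i) F i) = \sum_(i <- r | P i) mkP N a (F i).
Proof. exact: (@lin_sum m' N (fun x => mkP N a x) I r P F (@mkP_linr N k m' a)). Qed.

Lemma prodT_sum m j I (r : seq I) (P : pred I) (F : I -> tensor m) :
  prodT Rc j (\sum_(i <- r | P i) F i) = \sum_(i <- r | P i) prodT Rc j (F i).
Proof. exact: (@lin_sum m m (prodT Rc j) I r P F (prodT_lin m j)). Qed.

Lemma mkPZl N k m' c (a : tensor k) (b : tensor m') : mkP N (c *: a) b = c *: mkP N a b.
Proof. exact: (proj2 (@mkP_linl N k m' b)). Qed.

Lemma mkPZr N k m' c (a : tensor k) (b : tensor m') : mkP N a (c *: b) = c *: mkP N a b.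
Proof. exact: (proj2 (@mkP_linr N k m' a)). Qed.

Lemma prodTZ m j c (x : tensor m) : prodT Rc j (c *: x) = c *: prodT Rc j x.
Proof. exact: (proj2 (prodT_lin m j)). Qed.

Lemma yop_split N k m' (a : tensor k) (b : tensor m') : (k <= N)%N -> (k + m')%N = N.+1 ->
  yop Rc q (mkP N.+1 a b) =
  q ^+ (N.+1 - k) *: mkP N.+1 (yop Rc q a) b + (-1) ^+ k *: prodT Rc k (mkP N.+1 a (yop Rc q b)).
Proof.
move=> hk hm.
set Z := mkP N.+1 a b.
pose F j := ((-1) ^+ j * q ^+ (N - j)) *: prodT Rc j Z.
have -> : yop Rc q Z = \sum_(0 <= j < N.+1) F j.
  by rewrite /yop big_mkord; apply: eq_bigr.
have -> : \sum_(0 <= j < N.+1) F j = \sum_(0 <= j < k) F j + \sum_(k <= j < N.+1) F j.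
  by apply: big_cat_nat; lia.
congr (_ + _).
  rewrite big_mkord /yop mkP_suml scaler_sumr; apply: eq_bigr => j _.
  rewrite /F /Z prodTL // mkPZl scalerA; congr (_ *: _).
  have hj := ltn_ord j.
  rewrite (_ : (N - j = (N.+1 - k) + (k.-1 - j))%N); last lia.
  by rewrite exprD; ring.
have -> : \sum_(k <= j < N.+1) F j = \sum_(i < m') F (k + i).
  rewrite -{1}[k]add0n big_addn big_mkord (_ : (N.+1 - k = m')%N); last lia.
  by apply: eq_bigr => i _; rewrite addnC.
rewrite /yop mkP_sumr prodT_sum scaler_sumr; apply: eq_bigr => i _.
rewrite /F /Z prodT_split sprodR // mkPZr prodTZ scalerA; congr (_ *: _).
have hi := ltn_ord i.
rewrite (_ : (m'.-1 - i = N - (k + i))%N); last lia.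
by rewrite exprD; ring.
Qed.

Lemma key N k m' (a : tensor k) (b : tensor m') : (k < N)%N -> (k + m')%N = N.+1 ->
  Lsp Rc q N a -> Wt (mkP N.+1 (yop Rc q a) b).
Proof.
move=> hkN hm HL.
have HW1 : Wt (yop Rc q (mkP N.+1 a b)).
  apply: (Wt_lin (yop_lin N.+1) (P := fun x => exists p, Kp p x)).
    by move=> y [p Hy]; exact: yop_W Hy.
  by apply: (span_mono _ (Lsp_KL b hm HL)) => y [p [_ Hy]]; exists p.
have HW2 (w : tensor m') : Wt (prodT Rc k (mkP N.+1 a w)).
  have [u Hu] := prodT_surj (N - k) w.
  have <- : prodT Rc N (mkP N.+1 a u) = prodT Rc k (mkP N.+1 a w).
    have E := @prodT_split N.+1 k (N - k) (mkP N.+1 a u).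
    by rewrite (subnKC (ltnW hkN)) in E; rewrite E sprodR // Hu.
  exact: prodTN_W (Lsp_KL u hm HL).
have -> : mkP N.+1 (yop Rc q a) b = (q ^+ (N.+1 - k))^-1 *:
     (yop Rc q (mkP N.+1 a b) - (-1) ^+ k *: prodT Rc k (mkP N.+1 a (yop Rc q b))).
  rewrite yop_split //; last lia.
  by rewrite addrK scalerA mulVf ?scale1r // expf_neq0.
apply: Wt_Z; apply: Wt_D => //.
rewrite -scaleN1r; apply: Wt_Z; apply: Wt_Z; exact: HW2.
Qed.

End Hyp.
End Rel.
End Basic.

Unset Implicit Arguments.

Theorem lemma4p1 (K : fieldType) (d : nat) (Rc : coef K d) (q : K) (n k : nat)
    (a : tensor K d k) :
  is_hecke Rc q -> (1 < n)%N -> (0 < k)%N -> (k < n)%N ->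
  Lsp Rc q n a -> VL Rc q n (yop Rc q a).
Proof.
case=> Hq Hquad Hbraid _.
case: k a => [//|k'] a _ hkn HL.
rewrite /VL (front_dec Hq (yop Rc q a)).
apply: span_sum => i _; apply: span_gen.
exists (delta K 1 [:: i]), (slice i (yop Rc q a)), (add1n k'); split; last by rewrite mkP_tprod.
exists (ltnW (ltnW hkn)) => b.
rewrite mkP_tprod -(slice_mkP Hq).
have hm : (k'.+1 + (n - k'))%N = n.+1 by lia.
exact: (key Hquad Hbraid Hq b hkn hm HL).
Qed.
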